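(* Let $\eta,\xi\in\Omega_n$ with $\eta\preceq\xi$ and let $i\in\{1,\dots,n\}$. Let $a=\min\{\xi(i-1),\xi(i+1)\}$, $b=\max\{\xi(i-1),\xi(i+1)\}$, $c=\min\{\eta(i-1),\eta(i+1)\}$, $d=\max\{\eta(i-1),\eta(i+1)\}$. Then $$0\le m(a,b)-m(c,d)\le\frac{a+b}{2}-\frac{c+d}{2},$$ where $m(x,y)$ denotes the expected value of a random variable with law $\mu_{xy}$.
   Context: Fix $\beta>0$ and integer $n\ge1$. $\Omega_n=\{0,\dots,n\}^n$, with boundary convention $\eta(0)=\eta(n+1)=0$ for every configuration. Partial order: $\eta\preceq\xi$ iff $\eta(i)\le\xi(i)$ for all $i\in\{1,\dots,n\}$. For integers $0\le x\le y\le n$, $\mu_{xy}$ is the distribution on $\{0,\dots,n\}$ with $\mu_{xy}(j)\propto e^{-2\beta(x-j)}$ for $0\le j<x$, $\mu_{xy}(j)\propto 1$ for $x\le j\le y$, and $\mu_{xy}(j)\propto e^{-2\beta(j-y)}$ for $y<j\le n$. Thus $m(a,b)$ and $m(c,d)$ are the expected new heights at $i$ after a column (heat-bath) update at position $i$ in configurations $\xi$ and $\eta$ respectively, for the SOS Gibbs distribution $\mu(\eta)\propto\exp\{-\beta\sum_{k=1}^{n+1}|\eta(k-1)-\eta(k)|\}$. *)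

(* Defs.v *)
From Stdlib Require Import Reals Lra Lia Arith Bool.
Open Scope R_scope.

(* Values at other indices are ignored:
   the boundary convention eta(0)=eta(n+1)=0 is imposed by [ext]. *)
Definition in_Omega (n : nat) (eta : nat -> nat) : Prop :=
  forall k, (1 <= k <= n)%nat -> (eta k <= n)%nat.

Definition ext (n : nat) (eta : nat -> nat) (k : nat) : nat :=
  if andb (1 <=? k)%nat (k <=? n)%nat then eta k else 0%nat.

Definition cfg_le (n : nat) (eta xi : nat -> nat) : Prop :=
  forall k, (1 <= k <= n)%nat -> (eta k <= xi k)%nat.

Definition mu_w (beta : R) (x y j : nat) : R :=
  if (j <? x)%nat then exp (- 2 * beta * (INR x - INR j))
  else if (j <=? y)%nat then 1
  else exp (- 2 * beta * (INR j - INR y)).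

Definition mu_xy (n : nat) (beta : R) (x y j : nat) : R :=
  mu_w beta x y j / sum_f_R0 (fun k => mu_w beta x y k) n.

Definition m_xy (n : nat) (beta : R) (x y : nat) : R :=
  sum_f_R0 (fun j => INR j * mu_xy n beta x y j) n.

(* Main.v *)
Require Import Defs.
From Stdlib Require Import Reals Lra Lia Arith Bool.
Open Scope R_scope.

Section S.
Variable beta : R.
Hypothesis Hb : 0 < beta.
Let q := exp (- 2 * beta).
Definition ge_ (i : nat) := exp (- 2 * beta * INR i).

Lemma q_pos : 0 < q. Proof. apply exp_pos. Qed.
Lemma q_lt1 : q < 1.
Proof. unfold q. rewrite <- exp_0. apply exp_increasing. lra. Qed.

Lemma ge_0 : ge_ 0 = 1.
Proof. unfold ge_. simpl. rewrite Rmult_0_r. apply exp_0. Qed.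
Lemma ge_S k : ge_ (S k) = q * ge_ k.
Proof. unfold ge_, q. rewrite <- exp_plus. f_equal. rewrite S_INR. ring. Qed.
Lemma ge_pos k : 0 < ge_ k. Proof. apply exp_pos. Qed.

Lemma G_facts k :
  (1 - q) * sum_f_R0 ge_ k = 1 - ge_ (S k) /\
  (1 - q) * sum_f_R0 (fun i => INR (S i) * ge_ i) k =
     sum_f_R0 ge_ k - INR (S k) * ge_ (S k).
Proof.
  induction k as [|k [IH1 IH2]].
  - simpl. rewrite ge_S, ge_0. split; ring.
  - rewrite !tech5. rewrite (ge_S (S k)).
    split.
    + rewrite Rmult_plus_distr_l, IH1, ge_S. ring.
    + rewrite Rmult_plus_distr_l, IH2. rewrite !S_INR. ring.
Qed.

Lemma muw_geo x j : (j <= x)%nat -> mu_w beta (S x) (S x) j = q * mu_w beta x x j.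
Proof.
  intros H. unfold mu_w, q.
  destruct (Nat.ltb_spec j (S x)); [|lia].
  destruct (Nat.ltb_spec j x).
  - rewrite <- exp_plus. f_equal. rewrite S_INR. ring.
  - destruct (Nat.leb_spec j x); [|lia]. assert (j = x) by lia. subst.
    rewrite Rmult_1_r. f_equal. rewrite S_INR. ring.
Qed.

Lemma muw_xx x : mu_w beta x x x = 1.
Proof. unfold mu_w. destruct (Nat.ltb_spec x x); [lia|].
  destruct (Nat.leb_spec x x); [reflexivity|lia]. Qed.

Lemma muw_ext x y j : (x <= y)%nat -> (j <= y)%nat -> mu_w beta x (S y) j = mu_w beta x y j.
Proof.
  intros H1 H2. unfold mu_w.
  destruct (Nat.ltb_spec j x); [reflexivity|].
  destruct (Nat.leb_spec j (S y)); [|lia].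
  destruct (Nat.leb_spec j y); [reflexivity|lia].
Qed.

Lemma muw_top x y : (x <= S y)%nat -> mu_w beta x (S y) (S y) = 1.
Proof. intros H. unfold mu_w. destruct (Nat.ltb_spec (S y) x); [lia|].
  destruct (Nat.leb_spec (S y) (S y)); [reflexivity|lia]. Qed.

Lemma muw_right1 x y i : (x <= y)%nat -> mu_w beta x (S y) (S y + i) = ge_ i.
Proof.
  intros H. unfold mu_w, ge_.
  destruct (Nat.ltb_spec (S y + i) x); [lia|].
  destruct (Nat.leb_spec (S y + i) (S y)).
  - assert (i = 0%nat) by lia. subst. simpl. rewrite Rmult_0_r. now rewrite exp_0.
  - f_equal. rewrite plus_INR. ring.
Qed.

Lemma muw_right0 x y i : (x <= y)%nat -> mu_w beta x y (S y + i) = q * ge_ i.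
Proof.
  intros H. unfold mu_w, ge_, q.
  destruct (Nat.ltb_spec (S y + i) x); [lia|].
  destruct (Nat.leb_spec (S y + i) y); [lia|].
  rewrite <- exp_plus. f_equal. rewrite plus_INR, S_INR. ring.
Qed.

Lemma muw_pos x y j : 0 < mu_w beta x y j.
Proof. unfold mu_w. destruct (j <? x)%nat; [apply exp_pos|].
  destruct (j <=? y)%nat; [lra|apply exp_pos]. Qed.

Definition SL x y := sum_f_R0 (mu_w beta x y) y.
Definition TL x y := sum_f_R0 (fun j => INR j * mu_w beta x y j) y.

Lemma geo x : 1 <= SL x x /\ (1 - q) * SL x x <= 1 /\
  (1 - q) * (INR x * SL x x - TL x x) <= SL x x - 1 /\ 0 <= INR x * SL x x - TL x x.
Proof.
  pose proof q_pos as Hq0. pose proof q_lt1 as Hq1.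
  induction x as [|x IH].
  - unfold SL, TL. simpl. rewrite muw_xx. lra.
  - assert (ES : SL (S x) (S x) = q * SL x x + 1).
    { unfold SL. rewrite tech5, muw_xx. f_equal.
      rewrite scal_sum. apply sum_eq. intros j Hj. rewrite muw_geo by lia. ring. }
    assert (ET : TL (S x) (S x) = q * TL x x + INR (S x)).
    { unfold TL. rewrite tech5, muw_xx. f_equal; [|ring].
      rewrite scal_sum. apply sum_eq. intros j Hj. rewrite muw_geo by lia. ring. }
    rewrite ES, ET. destruct IH as (H1 & H2 & H3 & H4).
    set (S0 := SL x x) in *. set (T0 := TL x x) in *.
    assert (ED : INR (S x) * (q * S0 + 1) - (q * T0 + INR (S x)) = q * ((INR x * S0 - T0) + S0)).
    { rewrite S_INR. ring. }
    rewrite ED. set (D0 := INR x * S0 - T0) in *.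
    assert (A1 : q * ((1 - q) * S0) <= q * 1) by (apply Rmult_le_compat_l; lra).
    assert (A2 : q * ((1 - q) * D0 + (1 - q) * S0) <= q * (S0 - 1 + 1))
      by (apply Rmult_le_compat_l; lra).
    assert (A3 : 0 <= q * (D0 + S0)) by (apply Rmult_le_pos; lra).
    assert (A4 : 0 <= q * S0) by (apply Rmult_le_pos; lra).
    repeat split; nra.
Qed.

Lemma left_inv p x : let y := (x + p)%nat in
  1 <= SL x y /\ 0 <= INR y * SL x y - TL x y /\
  forall G, 0 <= G -> (1 - q) * G <= 1 ->
  0 <= SL x y ^ 2 - (1 - q) * G * SL x y
       - 2 * (1 - q) * G * (INR y * SL x y - TL x y) + q * G ^ 2.
Proof.
  pose proof q_pos as Hq0. pose proof q_lt1 as Hq1.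
  induction p as [|p IH]; intros y.
  - subst y. rewrite Nat.add_0_r. destruct (geo x) as (H1 & H2 & H3 & H4).
    set (S0 := SL x x) in *. set (D0 := INR x * S0 - TL x x) in *.
    repeat split; try lra.
    intros G HG1 HG2.
    assert (E: S0 ^ 2 - (1 - q) * G * S0 - 2 * G * (S0 - 1) + q * G ^ 2
       = (S0 - G)^2 + G * (2 - (1-q) * S0 - (1-q) * G)) by ring.
    assert (0 <= G * (S0 - 1 - (1 - q) * D0)) by (apply Rmult_le_pos; lra).
    assert (0 <= G * (2 - (1-q) * S0 - (1-q) * G)) by (apply Rmult_le_pos; lra).
    pose proof (pow2_ge_0 (S0 - G)).
    assert (E2 : S0 ^ 2 - (1 - q) * G * S0 - 2 * (1 - q) * G * D0 + q * G ^ 2 =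
      (S0 - G)^2 + G * (2 - (1-q) * S0 - (1-q) * G) + 2 * (G * (S0 - 1 - (1 - q) * D0))) by ring.
    lra.
  - destruct IH as (H1 & H2 & H3).
    assert (Ey : y = S (x + p)) by (subst y; lia).
    assert (ES : SL x y = SL x (x + p) + 1).
    { rewrite Ey. unfold SL. rewrite tech5, muw_top by lia. f_equal.
      apply sum_eq. intros j Hj. apply muw_ext; lia. }
    assert (ET : TL x y = TL x (x + p) + INR y).
    { rewrite Ey. unfold TL. rewrite tech5, muw_top by lia. f_equal; [|ring].
      apply sum_eq. intros j Hj. rewrite muw_ext by lia. reflexivity. }
    rewrite ES, ET. rewrite Ey. rewrite S_INR.
    set (S0 := SL x (x + p)) in *. set (T0 := TL x (x + p)) in *.
    set (Y := INR (x + p)) in *.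
    assert (ED : (Y + 1) * (S0 + 1) - (T0 + (Y + 1)) = (Y * S0 - T0) + S0) by ring.
    rewrite ED. set (D0 := Y * S0 - T0) in *.
    repeat split; try lra.
    intros G HG1 HG2. specialize (H3 G HG1 HG2).
    assert (0 <= (1 - (1-q) * G) * (2 * S0 + 1)) by (apply Rmult_le_pos; lra).
    assert (E2 : (S0 + 1) ^ 2 - (1 - q) * G * (S0 + 1) - 2 * (1 - q) * G * (D0 + S0) + q * G ^ 2 =
      (S0 ^ 2 - (1 - q) * G * S0 - 2 * (1 - q) * G * D0 + q * G ^ 2) + (1 - (1-q) * G) * (2 * S0 + 1)) by ring.
    lra.
Qed.

Lemma lin_sum (f g : nat -> R) a b N :
  sum_f_R0 (fun i => a * f i + b * g i) N = a * sum_f_R0 f N + b * sum_f_R0 g N.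
Proof. induction N; simpl; [ring|rewrite IHN; ring]. Qed.

Variable n : nat.
Definition Zs x y := sum_f_R0 (mu_w beta x y) n.
Definition Ts x y := sum_f_R0 (fun j => INR j * mu_w beta x y j) n.

Lemma Zs_pos x y : 0 < Zs x y.
Proof.
  unfold Zs. induction n as [|k IH]; simpl; [apply muw_pos|].
  pose proof (muw_pos x y (S k)). lra.
Qed.

Lemma m_eq x y : m_xy n beta x y = Ts x y / Zs x y.
Proof.
  unfold m_xy, mu_xy, Ts. fold (Zs x y). unfold Rdiv. rewrite (Rmult_comm (sum_f_R0 _ n)), scal_sum.
  apply sum_eq. intros. change (sum_f_R0 (fun k => mu_w beta x y k) n) with (Zs x y). ring.
Qed.

Lemma ystep x y : (x <= y)%nat -> (y < n)%nat ->
  0 <= m_xy n beta x (S y) - m_xy n beta x y <= 1/2.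
Proof.
  intros Hxy Hyn. pose proof q_pos as Hq0. pose proof q_lt1 as Hq1.
  rewrite !m_eq.
  set (K := (n - S y)%nat).
  set (G := sum_f_R0 ge_ K). set (H := sum_f_R0 (fun i => INR (S i) * ge_ i) K).
  assert (EZ : Zs x y = SL x y + q * G).
  { unfold Zs, SL. rewrite (tech2 _ y n Hyn). f_equal. unfold G. rewrite scal_sum.
    apply sum_eq. intros i _. rewrite muw_right0 by lia. ring. }
  assert (EZ' : Zs x (S y) = SL x y + G).
  { unfold Zs, SL. rewrite (tech2 _ y n Hyn). f_equal.
    - apply sum_eq. intros j Hj. apply muw_ext; lia.
    - apply sum_eq. intros i _. apply muw_right1; lia. }
  assert (ET : Ts x y = TL x y + q * (INR y * G + H)).
  { unfold Ts, TL. rewrite (tech2 _ y n Hyn). f_equal.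
    transitivity (sum_f_R0 (fun i => (q * INR y) * ge_ i + q * (INR (S i) * ge_ i)) K).
    - apply sum_eq. intros i _. rewrite muw_right0 by lia. rewrite plus_INR, !S_INR. ring.
    - rewrite lin_sum. fold G H. ring. }
  assert (ET' : Ts x (S y) = TL x y + (INR y * G + H)).
  { unfold Ts, TL. rewrite (tech2 _ y n Hyn). f_equal.
    - apply sum_eq. intros j Hj. rewrite muw_ext by lia. reflexivity.
    - transitivity (sum_f_R0 (fun i => INR y * ge_ i + 1 * (INR (S i) * ge_ i)) K).
      + apply sum_eq. intros i _. rewrite muw_right1 by lia. rewrite plus_INR, !S_INR. ring.
      + rewrite lin_sum. fold G H. ring. }
  destruct (G_facts K) as [HG1 HG2]. fold G in HG1, HG2. fold H in HG2.
  assert (HG0 : 0 <= G) by (apply cond_pos_sum; intros; left; apply ge_pos).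
  assert (HH0 : 0 <= H).
  { apply cond_pos_sum; intros; apply Rmult_le_pos; [apply pos_INR|left; apply ge_pos]. }
  pose proof (ge_pos (S K)) as Hgk. pose proof (pos_INR (S K)).
  assert (HsG : (1 - q) * G <= 1) by lra.
  assert (HsH : (1 - q) * H <= G).
  { assert (0 <= INR (S K) * ge_ (S K)) by (apply Rmult_le_pos; lra). lra. }
  destruct (left_inv (y - x) x) as (L1 & L2 & L3).
  replace (x + (y - x))%nat with y in L1, L2, L3 by lia.
  specialize (L3 G HG0 HsG).
  rewrite EZ, EZ', ET, ET'.
  set (S0 := SL x y) in *. set (D0 := INR y * S0 - TL x y) in *.
  replace (TL x y) with (INR y * S0 - D0) by (unfold D0; ring).
  set (Y := INR y).
  assert (HZ : 0 < S0 + q * G) by nra.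
  assert (HZ' : 0 < S0 + G) by nra.
  set (Nm := (1 - q) * (G * D0 + H * S0)).
  assert (Hd : (Y * S0 - D0 + (Y * G + H)) / (S0 + G) -
               (Y * S0 - D0 + q * (Y * G + H)) / (S0 + q * G)
               = Nm * / ((S0 + q * G) * (S0 + G))).
  { unfold Nm. field. lra. }
  rewrite Hd.
  assert (Hi : 0 < / ((S0 + q * G) * (S0 + G))).
  { apply Rinv_0_lt_compat. nra. }
  assert (HN0 : 0 <= Nm).
  { unfold Nm. apply Rmult_le_pos; [lra|].
    assert (0 <= G * D0) by (apply Rmult_le_pos; lra).
    assert (0 <= H * S0) by (apply Rmult_le_pos; lra). lra. }
  assert (HN1 : 2 * Nm <= (S0 + q * G) * (S0 + G)).
  { unfold Nm.
    assert (S0 * ((1 - q) * H) <= S0 * G) by (apply Rmult_le_compat_l; lra).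
    nra. }
  split.
  - apply Rmult_le_pos; lra.
  - assert (Nm * / ((S0 + q * G) * (S0 + G)) * 2 <= 1).
    { replace (Nm * / ((S0 + q * G) * (S0 + G)) * 2) with
        ((2 * Nm) * / ((S0 + q * G) * (S0 + G))) by ring.
      replace 1 with (((S0 + q * G) * (S0 + G)) * / ((S0 + q * G) * (S0 + G)))
        by (field; nra).
      apply Rmult_le_compat_r; lra. }
    lra.
Qed.

Lemma refl_sum (f : nat -> R) N : sum_f_R0 f N = sum_f_R0 (fun j => f (N - j)%nat) N.
Proof.
  revert f. induction N as [|N IH]; intros f.
  - reflexivity.
  - rewrite decomp_sum by lia. simpl pred. rewrite IH. rewrite tech5.
    rewrite Nat.sub_diag. rewrite Rplus_comm. f_equal.
    apply sum_eq. intros j Hj. f_equal. lia.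
Qed.

Lemma muw_refl x y j : (x <= y)%nat -> (y <= n)%nat -> (j <= n)%nat ->
  mu_w beta x y (n - j) = mu_w beta (n - y) (n - x) j.
Proof.
  intros H1 H2 H3. unfold mu_w.
  destruct (Nat.ltb_spec (n - j) x).
  - destruct (Nat.ltb_spec j (n - y)); [lia|].
    destruct (Nat.leb_spec j (n - x)); [lia|].
    f_equal. rewrite !minus_INR by lia. ring.
  - destruct (Nat.leb_spec (n - j) y).
    + destruct (Nat.ltb_spec j (n - y)); [lia|].
      destruct (Nat.leb_spec j (n - x)); [reflexivity|lia].
    + destruct (Nat.ltb_spec j (n - y)); [|lia].
      f_equal. rewrite !minus_INR by lia. ring.
Qed.

Lemma m_refl x y : (x <= y)%nat -> (y <= n)%nat ->
  m_xy n beta x y = INR n - m_xy n beta (n - y) (n - x).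
Proof.
  intros H1 H2. rewrite !m_eq.
  assert (EZ : Zs x y = Zs (n - y) (n - x)).
  { unfold Zs. rewrite refl_sum. apply sum_eq. intros. apply muw_refl; lia. }
  assert (ET : Ts x y = INR n * Zs (n - y) (n - x) - Ts (n - y) (n - x)).
  { unfold Ts. rewrite refl_sum. unfold Zs.
    rewrite scal_sum. rewrite <- minus_sum.
    apply sum_eq. intros j Hj. rewrite muw_refl by lia. rewrite minus_INR by lia. ring. }
  rewrite ET, EZ. pose proof (Zs_pos (n - y) (n - x)). field. lra.
Qed.

Lemma xstep x y : (x < y)%nat -> (y <= n)%nat ->
  0 <= m_xy n beta (S x) y - m_xy n beta x y <= 1/2.
Proof.
  intros H1 H2. rewrite (m_refl (S x) y), (m_refl x y) by lia.
  replace (n - x)%nat with (S (n - S x)) by lia.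
  assert (Hy : (n - y <= n - S x)%nat) by lia.
  assert (Hn : (n - S x < n)%nat) by lia.
  pose proof (ystep (n - y) (n - S x) Hy Hn). lra.
Qed.

Lemma ychain x y k : (x <= y)%nat -> (y + k <= n)%nat ->
  0 <= m_xy n beta x (y + k) - m_xy n beta x y <= INR k / 2.
Proof.
  intros H1. induction k as [|k IH]; intros H2.
  - rewrite Nat.add_0_r. simpl. lra.
  - replace (y + S k)%nat with (S (y + k)) by lia.
    pose proof (ystep x (y + k) ltac:(lia) ltac:(lia)).
    specialize (IH ltac:(lia)). rewrite S_INR. lra.
Qed.

Lemma xchain x y k : (x + k <= y)%nat -> (y <= n)%nat ->
  0 <= m_xy n beta (x + k) y - m_xy n beta x y <= INR k / 2.
Proof.
  intros H1 H2. induction k as [|k IH].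
  - rewrite Nat.add_0_r. simpl. lra.
  - replace (x + S k)%nat with (S (x + k)) by lia.
    pose proof (xstep (x + k) y ltac:(lia) H2).
    specialize (IH ltac:(lia)). rewrite S_INR. lra.
Qed.

Lemma combine a b c d : (c <= d)%nat -> (d <= b)%nat -> (b <= n)%nat ->
  (c <= a)%nat -> (a <= b)%nat ->
  0 <= m_xy n beta a b - m_xy n beta c d /\ m_xy n beta a b - m_xy n beta c d <= (INR a + INR b) / 2 - (INR c + INR d) / 2.
Proof.
  intros H1 H2 H3 H4 H5.
  pose proof (ychain c d (b - d) H1 ltac:(lia)) as Y.
  replace (d + (b - d))%nat with b in Y by lia.
  pose proof (xchain c b (a - c) ltac:(lia) H3) as X.
  replace (c + (a - c))%nat with a in X by lia.
  rewrite !minus_INR in X, Y by lia. split; lra.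
Qed.

End S.

Lemma ext_le n xi k : in_Omega n xi -> (ext n xi k <= n)%nat.
Proof.
  intros H. unfold ext. destruct (andb (1 <=? k)%nat (k <=? n)%nat) eqn:E.
  - apply andb_true_iff in E as [E1 E2]. apply Nat.leb_le in E1, E2. apply H; lia.
  - lia.
Qed.

Lemma ext_mono n eta xi k : cfg_le n eta xi -> (ext n eta k <= ext n xi k)%nat.
Proof.
  intros H. unfold ext. destruct (andb (1 <=? k)%nat (k <=? n)%nat) eqn:E.
  - apply andb_true_iff in E as [E1 E2]. apply Nat.leb_le in E1, E2. apply H; lia.
  - lia.
Qed.

Theorem corollary3p3 (beta : R) (n : nat) (eta xi : nat -> nat) (i : nat) :
  0 < beta -> (1 <= n)%nat ->
  in_Omega n eta -> in_Omega n xi -> cfg_le n eta xi ->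
  (1 <= i <= n)%nat ->
  let a := Nat.min (ext n xi (i - 1)) (ext n xi (i + 1)) in
  let b := Nat.max (ext n xi (i - 1)) (ext n xi (i + 1)) in
  let c := Nat.min (ext n eta (i - 1)) (ext n eta (i + 1)) in
  let d := Nat.max (ext n eta (i - 1)) (ext n eta (i + 1)) in
  0 <= m_xy n beta a b - m_xy n beta c d /\
  m_xy n beta a b - m_xy n beta c d <=
    (INR a + INR b) / 2 - (INR c + INR d) / 2.
Proof.
  intros Hb Hn Heta Hxi Hle Hi a b c d.
  pose proof (ext_le n xi (i - 1) Hxi). pose proof (ext_le n xi (i + 1) Hxi).
  pose proof (ext_mono n eta xi (i - 1) Hle). pose proof (ext_mono n eta xi (i + 1) Hle).
  apply combine; auto; unfold a, b, c, d; lia.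
Qed.
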